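(* Let $X$ be a complex Banach space, $\mathcal{F}$ and $\mathcal{G}$ algebras with unit, $\eta:\mathcal{G}\to\mathcal{F}$ a unital algebra homomorphism, and $\Phi:\mathcal{F}\to\mathcal{C}(X)$, $\Psi:\mathcal{G}\to\mathcal{C}(X)$ proto-calculi. Let $\mathcal{E}$ be an algebraic core for $\Psi$ such that $\Phi(\eta(e))=\Psi(e)$ for all $e\in\mathcal{E}$. Then the following are equivalent: (i) $\Phi\circ\eta=\Psi$; (ii) $\eta(\mathcal{G})$ is a $\Phi$-regular subalgebra of $\mathcal{F}$; (iii) $\eta(\mathcal{E})$ is an algebraic core for the restriction of $\Phi$ to $\eta(\mathcal{G})$. Moreover, (i)–(iii) hold if $\Phi$ is a calculus and $\mathcal{F}$ is commutative.
   Context: Algebras need not be commutative. $\mathcal{L}(X)$, $\mathcal{C}(X)$: bounded, resp. closed linear operators on $X$; operator inclusions are graph inclusions, sums/products have natural domains, ''$Tx=y$'' means $x\in\mathrm{dom}(T)$, $Tx=y$. For a unital algebra $\mathcal{H}$, a proto-calculus is a map $\Phi:\mathcal{H}\to\mathcal{C}(X)$ with (FC1) $\Phi(\mathbf{1})=I$; (FC2) $\lambda\Phi(f)\subseteq\Phi(\lambda f)$, $\Phi(f)+\Phi(g)\subseteq\Phi(f+g)$; (FC3) $\Phi(f)\Phi(g)\subseteq\Phi(fg)$ with $\mathrm{dom}(\Phi(f)\Phi(g))=\mathrm{dom}(\Phi(g))\cap\mathrm{dom}(\Phi(fg))$. $\mathrm{bdd}(\mathcal{H},\Phi)=\{f:\Phi(f)\in\mathcal{L}(X)\}$;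 for $\mathcal{E}\subseteq\mathcal{H}$, $[f]_{\mathcal{E}}=\{e\in\mathcal{E}:ef\in\mathcal{E}\}$; $\mathrm{reg}(f,\Phi)=[f]_{\mathrm{bdd}(\mathcal{H},\Phi)}$. A subset $\mathcal{E}\subseteq\mathrm{bdd}(\mathcal{H},\Phi)$ is an algebraic core for $\Phi$ if for every $f\in\mathcal{H}$ and $x,y\in X$: $\Phi(f)x=y\iff\Phi(ef)x=\Phi(e)y$ for all $e\in[f]_{\mathcal{E}}$. A calculus is a proto-calculus for which $\mathrm{bdd}(\mathcal{H},\Phi)$ is an algebraic core. A unital subalgebra $\mathcal{H}_0$ of $\mathcal{H}$ is $\Phi$-regular if the restriction $\Phi|_{\mathcal{H}_0}$ is a calculus on $\mathcal{H}_0$. *)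

(* Defs.v *)
From HB Require Import structures.
From mathcomp Require Import all_boot all_order all_algebra.
From mathcomp Require Export complex.
From mathcomp Require Import all_classical all_reals all_analysis.
Import GRing.Theory Num.Theory.
Local Open Scope ring_scope.
Local Open Scope classical_set_scope.

(* Linear operators on X are represented by their graphs, subsets of X * X.
   Operator inclusion = graph inclusion. *)
Section Ops.
Variables (K : numDomainType) (X : normedModType K).

Definition op := set (X * X).

Definition linear_op (T : op) : Prop :=
  [/\ T (0, 0),
      (forall x y x' y', T (x, y) -> T (x', y') -> T (x + x', y + y')),
      (forall (a : K) x y, T (x, y) -> T (a *: x, a *: y)) &
      (forall x y z, T (x, y) -> T (x, z) -> y = z)].

Definition closed_op (T : op) : Prop := linear_op T /\ closed T.

Definition bounded_op (T : op) : Prop :=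
  linear_op T /\
  exists f : X -> X, continuous f /\ forall x y, T (x, y) <-> y = f x.

Definition dom (T : op) : set X := [set x | exists y, T (x, y)].

Definition id_op : op := [set p | p.2 = p.1].

Definition scale_op (a : K) (T : op) : op :=
  [set p | exists y, T (p.1, y) /\ p.2 = a *: y].

Definition add_op (T S : op) : op :=
  [set p | exists y z, [/\ T (p.1, y), S (p.1, z) & p.2 = y + z]].

Definition mul_op (T S : op) : op :=
  [set p | exists y, S (p.1, y) /\ T (y, p.2)].
End Ops.
Arguments op {K} X.
Arguments id_op {K} X.
Arguments dom {K X}.
Arguments scale_op {K X}.
Arguments add_op {K X}.
Arguments mul_op {K X}.
Arguments linear_op {K X}.
Arguments closed_op {K X}.
Arguments bounded_op {K X}.

Section Calculus.
Variables (K : numDomainType) (X : normedModType K) (H : algType K).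
Implicit Types (Phi : H -> op X) (S E : set H).

Definition unital_subalg S : Prop :=
  [/\ S 1,
      (forall f g, S f -> S g -> S (f + g)),
      (forall (a : K) f, S f -> S (a *: f)) &
      (forall f g, S f -> S g -> S (f * g))].

Definition proto_calculus_on S Phi : Prop :=
  [/\ (forall f, S f -> closed_op (Phi f)),
      Phi 1 = id_op X,
      (forall (a : K) f, S f -> scale_op a (Phi f) `<=` Phi (a *: f)),
      (forall f g, S f -> S g -> add_op (Phi f) (Phi g) `<=` Phi (f + g)) &
      (forall f g, S f -> S g ->
         mul_op (Phi f) (Phi g) `<=` Phi (f * g) /\
         dom (mul_op (Phi f) (Phi g)) = dom (Phi g) `&` dom (Phi (f * g)))].

Definition proto_calculus Phi : Prop := proto_calculus_on setT Phi.

Definition bdd_on S Phi : set H := [set f | S f /\ bounded_op (Phi f)].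
Definition bdd Phi : set H := bdd_on setT Phi.

Definition reg_set E (f : H) : set H := [set e | E e /\ E (e * f)].

Definition alg_core_on S Phi E : Prop :=
  E `<=` bdd_on S Phi /\
  forall f, S f -> forall x y : X,
    Phi f (x, y) <->
    (forall e, reg_set E f e ->
       exists z, Phi e (y, z) /\ Phi (e * f) (x, z)).

Definition alg_core Phi E : Prop := alg_core_on setT Phi E.

Definition calculus_on S Phi : Prop :=
  proto_calculus_on S Phi /\ alg_core_on S Phi (bdd_on S Phi).

Definition calculus Phi : Prop := calculus_on setT Phi.

Definition regular_subalg Phi S : Prop :=
  unital_subalg S /\ calculus_on S Phi.
End Calculus.
Arguments unital_subalg {K H}.
Arguments proto_calculus_on {K X H}.
Arguments proto_calculus {K X H}.
Arguments bdd_on {K X H}.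
Arguments bdd {K X H}.
Arguments reg_set {K H}.
Arguments alg_core_on {K X H}.
Arguments alg_core {K X H}.
Arguments calculus_on {K X H}.
Arguments calculus {K X H}.
Arguments regular_subalg {K X H}.

(* Main.v *)
Require Import Defs.
From HB Require Import structures.
From mathcomp Require Import all_boot all_order all_algebra.
From mathcomp Require Import complex.
From mathcomp Require Import all_classical all_reals all_analysis.
Import GRing.Theory Num.Theory.
Local Open Scope ring_scope.
Local Open Scope classical_set_scope.

Section Aux.
Variables (K : numDomainType) (X : normedModType K) (H : algType K).

Lemma sv_op (T : op X) x y z : closed_op T -> T (x, y) -> T (x, z) -> y = z.
Proof. by case=> -[_ _ _ h] _; apply: h. Qed.

Lemma bval (T : op X) x : bounded_op T -> exists z, T (x, z).
Proof. by case=> _ [fn [_ hfn]]; exists (fn x); apply/hfn. Qed.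

Lemma pc_mul (Phi : H -> op X) e f x y z :
  proto_calculus Phi -> Phi f (x, y) -> Phi e (y, z) -> Phi (e * f) (x, z).
Proof.
case=> _ _ _ _ hM hf he; have [sub _] := hM e f I I.
by apply: sub; exists y.
Qed.

Lemma pc_fwd (Phi : H -> op X) e f x y :
  proto_calculus Phi -> bounded_op (Phi e) -> Phi f (x, y) ->
  exists z, Phi e (y, z) /\ Phi (e * f) (x, z).
Proof.
move=> hP hb hf; have [z hz] := @bval _ y hb.
by exists z; split => //; exact: (@pc_mul Phi e f x y z hP hf hz).
Qed.

Lemma pc_cl (Phi : H -> op X) f : proto_calculus Phi -> closed_op (Phi f).
Proof. by case=> h _ _ _ _; apply: h. Qed.

Lemma pc_restr (Phi : H -> op X) S : proto_calculus Phi -> proto_calculus_on S Phi.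
Proof.
case=> h1 h2 h3 h4 h5; split => //.
- by move=> f _; apply: h1.
- by move=> a f _; apply: h3.
- by move=> f g _ _; apply: h4.
- by move=> f g _ _; apply: h5.
Qed.
End Aux.
Arguments sv_op {K X T x y z}.
Arguments bval {K X T} x.
Arguments pc_mul {K X H Phi e f x y z}.
Arguments pc_fwd {K X H Phi e f x y}.
Arguments pc_cl {K X H Phi} f.
Arguments pc_restr {K X H Phi S}.

Section Main.
Variables (R : realType) (X : completeNormedModType R[i])
  (F G : algType R[i]) (eta : {lrmorphism G -> F})
  (Phi : F -> op X) (Psi : G -> op X)
  (hPhi : proto_calculus Phi) (hPsi : proto_calculus Psi)
  (E : set G) (hE : alg_core Psi E)
  (hagree : forall e, E e -> Phi (eta e) = Psi e).

Lemma Ebdd : forall e, E e -> bounded_op (Psi e).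
Proof. by have [hEb hEc] := hE; move=> e /hEb []. Qed.

Lemma incl : forall g x y, Phi (eta g) (x, y) -> Psi g (x, y).
Proof.
have [hEb hEc] := hE.
  move=> g x y hxy; apply/(hEc g I x y) => e [Ee Eeg].
  have be : bounded_op (Phi (eta e)) by rewrite hagree //; apply: Ebdd.
  have [z [hz1 hz2]] := pc_fwd hPhi be hxy.
  exists z; split; first by rewrite -hagree.
  by rewrite -hagree // rmorphM.
Qed.

Lemma unit_range : unital_subalg (range eta).
Proof.
  split.
  - by exists 1 => //; rewrite rmorph1.
  - by move=> _ _ [f _ <-] [g _ <-]; exists (f + g) => //; rewrite rmorphD.
  - by move=> a _ [f _ <-]; exists (a *: f) => //; rewrite linearZ.
  - by move=> _ _ [f _ <-] [g _ <-]; exists (f * g) => //; rewrite rmorphM.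
Qed.

Lemma i_iii : (forall g, Phi (eta g) = Psi g) -> alg_core_on (range eta) Phi (eta @` E).
Proof.
have [hEb hEc] := hE.
  move=> hi; split.
    move=> _ [e Ee <-]; split; first by exists e.
    by rewrite hagree //; apply: Ebdd.
  move=> _ [g _ <-] x y; split.
    move=> hxy e' [[e Ee <-] _]; apply: pc_fwd hPhi _ hxy.
    by rewrite hagree //; apply: Ebdd.
  move=> hall; rewrite hi; apply/(hEc g I x y) => e [Ee Eeg].
  have := hall (eta e); rewrite -rmorphM !hi; apply; split.
    by exists e.
  by exists (e * g); rewrite ?rmorphM.
Qed.

Lemma iii_ii : alg_core_on (range eta) Phi (eta @` E) -> regular_subalg Phi (range eta).
Proof.
  move=> [h1 h2]; split; first exact: unit_range.
  split; first exact: pc_restr.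
  split; first by [].
  move=> f Sf x y; split.
    by move=> hxy e [[_ hb] _]; apply: pc_fwd hPhi hb hxy.
  move=> hall; apply/(h2 f Sf x y) => e [Ee Eef]; apply: hall.
  by split; apply: h1.
Qed.

Lemma ii_i : regular_subalg Phi (range eta) -> forall g, Phi (eta g) = Psi g.
Proof.
  move=> [_ [_ [_ hc]]] g; apply/seteqP; split => -[x y] /=; first exact: incl.
  move=> hxy; apply/(hc (eta g) (ex_intro2 _ _ g I erefl) x y).
  move=> _ [[[h _ <-] hb] [_ hb2]].
  have [z hz] := bval y hb.
  have [z' hz'] := bval x hb2.
  exists z; split => //.
  have e1 : Psi (h * g) (x, z) by apply: pc_mul hPsi hxy (incl _ _ _ hz).
  have e2 : Psi (h * g) (x, z') by apply: incl; rewrite rmorphM.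
  by rewrite (sv_op (pc_cl _ hPsi) e1 e2).
Qed.

Lemma part3 : calculus Phi -> (forall f g : F, f * g = g * f) ->
     forall g, Phi (eta g) = Psi g.
Proof.
have [hEb hEc] := hE.
move=> [_ [_ hc]] comm g; apply/seteqP; split => -[x y] /=; first exact: incl.
move=> hxy; apply/(hc (eta g) I x y) => k [[_ bk] [_ bkf]].
have [a ha] := bval x bkf.
have [b hb] := bval y bk.
exists b; split => //.
suff : Psi g (0, a - b).
  move=> h0; have hl := pc_cl g hPsi.
  have h00 : Psi g (0, 0) by case: hl => -[].
  by move/eqP: (sv_op hl h0 h00); rewrite subr_eq0 => /eqP <-.
apply/(hEc g I 0 (a - b)) => e [Ee Eeg].
have [z [hz1 hz2]] := (hEc g I x y).1 hxy e (conj Ee Eeg).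
rewrite -hagree // in hz1; rewrite -hagree // rmorphM in hz2.
have be := Ebdd e Ee; rewrite -hagree // in be.
have [p hp] := bval a be.
have [q hq] := bval b be.
have [r hr] := bval z bk.
have cle := pc_cl (eta e) hPhi.
have pr : p = r.
  have u1 := pc_mul hPhi ha hp.
  have u2 := pc_mul hPhi hz2 hr.
  rewrite mulrA (comm (eta e) k) -mulrA in u1.
  exact: (sv_op (pc_cl (k * (eta e * eta g)) hPhi) u1 u2).
have qr : q = r.
  have u1 := pc_mul hPhi hb hq.
  have u2 := pc_mul hPhi hz1 hr.
  rewrite (comm (eta e) k) in u1.
  exact: (sv_op (pc_cl (k * eta e) hPhi) u1 u2).
exists 0; split.
  rewrite -hagree //.
  case: cle => -[_ hadd hsc _] _.
  have := hadd _ _ _ _ hp (hsc (-1) _ _ hq).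
  by rewrite !scaleN1r pr qr subrr.
by case: (pc_cl (e * g) hPsi) => -[].
Qed.
End Main.

Theorem theorem5p8 (R : realType) (X : completeNormedModType R[i])
  (F G : algType R[i]) (eta : {lrmorphism G -> F})
  (Phi : F -> op X) (Psi : G -> op X)
  (hPhi : proto_calculus Phi) (hPsi : proto_calculus Psi)
  (E : set G) (hE : alg_core Psi E)
  (hagree : forall e, E e -> Phi (eta e) = Psi e) :
  ((forall g, Phi (eta g) = Psi g) <-> regular_subalg Phi (range eta)) /\
  (regular_subalg Phi (range eta) <-> alg_core_on (range eta) Phi (eta @` E)) /\
  (calculus Phi -> (forall f g : F, f * g = g * f) ->
     forall g, Phi (eta g) = Psi g).
Proof.
have A := @i_iii R X F G eta Phi Psi hPhi E hE hagree.
have B := @iii_ii R X F G eta Phi hPhi E.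
have C := @ii_i R X F G eta Phi Psi hPhi hPsi E hE hagree.
have D := @part3 R X F G eta Phi Psi hPhi hPsi E hE hagree.
split; first by split; [move=> hi; apply: B; apply: A|exact: C].
split; first by split; [move=> hii; apply: A; apply: C|exact: B].
exact: D.
Qed.
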